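(* Let $A$ be an $n\times n$ generalized tournament matrix. If there exists $\alpha>1/2$ such that for every clan $I$ of $A$ with $|I|\geq 2$ the principal submatrix $A[I]$ is $\alpha$-separable, then $A$ is $\alpha$-linear.
   Context: A generalized tournament matrix of order $n$ is a real $n\times n$ matrix $M=(m_{ij})$ with nonnegative entries satisfying $M+M^{t}=J_n-I_n$. Write $[n]=\{1,\ldots,n\}$. A clan of $M$ is a subset $X\subseteq[n]$ such that for all $i,j\in X$ and $k\in[n]\setminus X$, $m_{ik}=m_{jk}$ and $m_{ki}=m_{kj}$. For $\alpha>1/2$, a matrix $M$ indexed by a set $V$ (such as a principal submatrix $A[I]$ indexed by $I$) is $\alpha$-separable if $V$ can be partitioned into two nonempty sets $X,Y$ with $m_{xy}=\alpha$ for all $x\in X,y\in Y$; $M$ is $\alpha$-linear if there is an ordering $x_1,\ldots,x_n$ of $[n]$ with $m_{x_ix_j}=\alpha$ whenever $i<j$. *)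

(* Defs.v *)
From mathcomp Require Import all_boot all_order all_algebra all_fingroup.
Set Implicit Arguments. Unset Strict Implicit. Unset Printing Implicit Defensive.
Import Order.TTheory GRing.Theory Num.Theory.
Local Open Scope ring_scope.

(* Indices [n] = {1..n} are represented by 'I_n = {0..n-1}. *)

Definition gen_tournament {R : realFieldType} {n : nat} (M : 'M[R]_n) : Prop :=
  (forall i j, 0 <= M i j) /\ M + M^T = const_mx 1 - 1%:M.

Definition clan {R : realFieldType} {n : nat} (M : 'M[R]_n) (X : {set 'I_n}) : Prop :=
  forall i j k, i \in X -> j \in X -> k \notin X ->
    M i k = M j k /\ M k i = M k j.

Definition alpha_separable {R : realFieldType} {n : nat} (M : 'M[R]_n)
    (alpha : R) (I : {set 'I_n}) : Prop :=
  exists X Y : {set 'I_n},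
    [/\ X :|: Y = I, X :&: Y = set0, X != set0, Y != set0 &
        forall x y, x \in X -> y \in Y -> M x y = alpha].

Definition alpha_linear {R : realFieldType} {n : nat} (M : 'M[R]_n) (alpha : R) : Prop :=
  exists s : 'S_n, forall i j : 'I_n, (i < j)%N -> M (s i) (s j) = alpha.

(* Main.v *)
Require Import Defs.
From mathcomp Require Import all_boot all_order all_algebra all_fingroup.
From mathcomp Require Import zify.
Import Order.TTheory GRing.Theory Num.Theory.
Local Open Scope ring_scope.

Lemma gt_compl (R : realFieldType) (n : nat) (A : 'M[R]_n) :
  gen_tournament A -> forall i k, i != k -> A k i = 1 - A i k.
Proof.
move=> [_ H] i k nik; have := congr1 (fun M : 'M[R]_n => M i k) H; rewrite !mxE /=.
rewrite (negbTE nik) mulr0n subr0 => <-.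
by rewrite [A i k + _]addrC addrK.
Qed.

Lemma sub_clan (R : realFieldType) (n : nat) (A : 'M[R]_n) (alpha : R) (I X Y : {set 'I_n}) :
  gen_tournament A -> clan A I -> X :|: Y = I -> X :&: Y = set0 ->
  (forall x y, x \in X -> y \in Y -> A x y = alpha) -> clan A X.
Proof.
move=> gt cI eI dI hXY i j k iX jX kX.
case kY: (k \in Y).
  have nik : i != k by apply/eqP => e; subst; move: kX; rewrite iX.
  have njk : j != k by apply/eqP => e; subst; move: kX; rewrite jX.
  by rewrite (gt_compl _ _ _ gt i k) // (gt_compl _ _ _ gt j k) // !hXY.
have kI : k \notin I by rewrite -eI inE negb_or kX kY.
by apply: cI => //; rewrite -eI inE ?iX ?jX.
Qed.

Lemma clan_lin (R : realFieldType) (n : nat) (A : 'M[R]_n) (alpha : R) :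
  gen_tournament A ->
  (forall I : {set 'I_n}, clan A I -> (2 <= #|I|)%N -> alpha_separable A alpha I) ->
  forall I, clan A I -> exists s : seq 'I_n,
    [/\ uniq s, forall x, (x \in s) = (x \in I) &
        pairwise (fun x y => A x y == alpha) s].
Proof.
move=> gt hs I.
elim: {I}#|I| {-2}I (leqnn #|I|) => [|m IH] I.
  rewrite leqn0 cards_eq0 => /eqP -> _; exists [::]; split => // x.
  by rewrite inE.
move=> hI cI; case: (leqP 2 #|I|) => h2; last first.
  exists (enum I); split; [exact: enum_uniq | by move=> x; rewrite mem_enum |].
  move: h2; rewrite cardE; case: (enum I) => [|a [|b t]] //.
move: (hs I cI h2) => [X [Y [eI dI nX nY hXY]]].
have cX := @sub_clan _ _ _ _ _ _ _ gt cI eI dI hXY.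
have cY : clan A Y.
  apply: (@sub_clan _ _ _ (1 - alpha) _ Y X gt cI); first by rewrite setUC.
    by rewrite setIC.
  move=> x y xY yX; rewrite (gt_compl _ _ _ gt y x) ?hXY //.
  apply/eqP => e; subst; have : x \in X :&: Y by rewrite inE xY yX.
  by rewrite dI inE.
have cardX : (#|X| + #|Y| = #|I|)%N by rewrite -eI cardsU dI cards0 subn0.
have pX : (0 < #|X|)%N by rewrite card_gt0.
have pY : (0 < #|Y|)%N by rewrite card_gt0.
have [sX [uX mX pwX]] := IH X ltac:(lia) cX.
have [sY [uY mY pwY]] := IH Y ltac:(lia) cY.
exists (sX ++ sY); split.
- rewrite cat_uniq uX uY andbT /=; apply/hasPn => y; rewrite mY mX => yY.
  apply/negP => yX; have : y \in X :&: Y by rewrite inE yX yY.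
  by rewrite dI inE.
- by move=> x; rewrite mem_cat mX mY -eI inE.
- rewrite pairwise_cat pwX pwY !andbT; apply/allrelP => x y.
  by rewrite mX mY => xX yY; rewrite hXY.
Qed.

Theorem lemma5p7 (R : realFieldType) (n : nat) (A : 'M[R]_n) (alpha : R) :
  gen_tournament A -> 1 / 2 < alpha ->
  (forall I : {set 'I_n}, clan A I -> (2 <= #|I|)%N -> alpha_separable A alpha I) ->
  alpha_linear A alpha.
Proof.
move=> gt _ hs.
have cT : clan A [set: 'I_n] by move=> i j k _ _; rewrite inE.
have [s [us ms pws]] := @clan_lin _ _ _ _ gt hs _ cT.
have sz : size s = n.
  rewrite -(card_uniqP us); transitivity #|[set: 'I_n]|; last by rewrite cardsT card_ord.
  apply: eq_card => x.
  by rewrite ms.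
have f_inj : injective (fun i : 'I_n => nth i s i).
  move=> i j /= e; apply/val_inj/eqP.
  have hi : (i < size s)%N by rewrite sz.
  have hj : (j < size s)%N by rewrite sz.
  rewrite -(nth_uniq i hi hj us); apply/eqP.
  by rewrite e (set_nth_default i j).
exists (perm f_inj) => i j lij; rewrite !permE.
rewrite (set_nth_default i j) ?sz //.
move/pairwiseP: pws => /(_ i) P; apply/eqP; apply: P => //; by rewrite inE sz.
Qed.
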